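(* Let $n\ge2$, $q=2^m$, and let $\mathbf{H}_X^{(q)}$, $\mathbf{H}_Z^{(q)}$ be $q$-ary labelings of the toric Tanner graphs $\mathcal{G}_X$, $\mathcal{G}_Z$ (as defined in the context), with codes $\mathcal{C}_X^{(q)}$, $\mathcal{C}_Z^{(q)}$. If every cycle of the labeled graph $\mathcal{G}_X$ has product $1$ and $(\mathcal{C}_Z^{(q)})^\perp\subset\mathcal{C}_X^{(q)}$, then every cycle of the labeled graph $\mathcal{G}_Z$ has product $1$.
   Context: Indices are taken in $\mathbb{Z}_{2n}=\{0,\dots,2n-1\}$ with arithmetic mod $2n$. Variable nodes: $V=\{(i,j)\in\mathbb{Z}_{2n}^2: i+j\text{ even}\}$ ($2n^2$ nodes). $X$-check nodes: $C_X=\{(i,j): i\text{ odd}, j\text{ even}\}$; $Z$-check nodes: $C_Z=\{(i,j): i\text{ even}, j\text{ odd}\}$. Each check node $(i,j)$ is adjacent to the four variable nodes $(i\pm1,j)$, $(i,j\pm1)$. $\mathcal{G}_X$ is the bipartite graph on $V\cup C_X$ and $\mathcal{G}_Z$ on $V\cup C_Z$ (these are the Tanner graphs of the binary toric code). A $q$-ary labeling is a matrix $\mathbf{H}_X^{(q)}=(x_{c,v})\in\mathbb{F}_q^{C_X\times V}$ with $x_{c,v}\neq0$ iff $c$ and $v$ are adjacent, and similarly $\mathbf{H}_Z^{(q)}=(z_{c,v})\in\mathbb{F}_q^{C_Z\times V}$; the label of edge $(c,v)$ is $x_{c,v}$ (resp. $z_{c,v}$). $\mathcal{C}_X^{(q)}=\{w\in\mathbb{F}_q^V:\mathbf{H}_X^{(q)}w=0\}$,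 $\mathcal{C}_Z^{(q)}=\{w\in\mathbb{F}_q^V:\mathbf{H}_Z^{(q)}w=0\}$, and $\perp$ is with respect to the standard bilinear form on $\mathbb{F}_q^V$ (so $(\mathcal{C}_Z^{(q)})^\perp\subset\mathcal{C}_X^{(q)}$ iff $\mathbf{H}_X^{(q)}(\mathbf{H}_Z^{(q)})^T=0$). For a cycle $v_1,c_1,v_2,\dots,v_k,c_k,v_1$ in a labeled Tanner graph with labels $h_{c,v}$, its product is $\prod_{t=1}^k h_{c_t v_{t+1}}h_{c_t v_t}^{-1}$ (indices of $v$ mod $k$). *)

(* Defs.v *)
From HB Require Import structures.
From mathcomp Require Import all_boot all_order all_algebra all_field.
Set Implicit Arguments. Unset Strict Implicit. Unset Printing Implicit Defensive.
Import GRing.Theory.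
Local Open Scope ring_scope.

(* Z_{2n} represented as 'I_(n.*2); a node is a pair (i,j). *)
Definition node (n : nat) := ('I_(n.*2) * 'I_(n.*2))%type.

Definition isV n (x : node n) : bool := ~~ odd (x.1 + x.2)%N.
Definition isCX n (x : node n) : bool := odd x.1 && ~~ odd x.2.
Definition isCZ n (x : node n) : bool := ~~ odd x.1 && odd x.2.

Definition Vnode n := {x : node n | isV x}.
Definition CXnode n := {x : node n | isCX x}.
Definition CZnode n := {x : node n | isCZ x}.

Definition nbr n (a b : 'I_(n.*2)) : bool :=
  (((a + 1) %% n.*2)%N == b) || (((b + 1) %% n.*2)%N == a).

Definition adj n (c v : node n) : bool :=
  ((c.2 == v.2) && nbr c.1 v.1) || ((c.1 == v.1) && nbr c.2 v.2).

Definition labeling (F : fieldType) n (C : finType) (cval : C -> node n)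
  (H : C -> Vnode n -> F) : Prop :=
  forall c v, (H c v != 0) = adj (cval c) (val v).

Definition code (F : fieldType) n (C : finType) (H : C -> Vnode n -> F)
  (w : Vnode n -> F) : Prop :=
  forall c, \sum_(v : Vnode n) H c v * w v = 0.

Definition dotV (F : fieldType) n (w u : Vnode n -> F) : F :=
  \sum_(v : Vnode n) w v * u v.

Definition perp_sub (F : fieldType) n (code1 code2 : (Vnode n -> F) -> Prop) : Prop :=
  forall w, (forall u, code1 u -> dotV w u = 0) -> code2 w.

Definition is_cycle n (C : finType) (cval : C -> node n) (k : nat)
  (vs : 'I_k -> Vnode n) (cs : 'I_k -> C) : Prop :=
  [/\ (2 <= k)%N, injective vs, injective cs &
      forall t : 'I_k, adj (cval (cs t)) (val (vs t)) &&
                       adj (cval (cs t)) (val (vs (ordS t)))].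

Definition cycle_product (F : fieldType) n (C : finType) (H : C -> Vnode n -> F)
  (k : nat) (vs : 'I_k -> Vnode n) (cs : 'I_k -> C) : F :=
  \prod_(t < k) (H (cs t) (vs (ordS t)) / H (cs t) (vs t)).

Definition all_cycles_one (F : fieldType) n (C : finType) (cval : C -> node n)
  (H : C -> Vnode n -> F) : Prop :=
  forall k (vs : 'I_k -> Vnode n) (cs : 'I_k -> C),
    is_cycle cval vs cs -> cycle_product H vs cs = 1.

(* Main.v *)
Require Import Defs.
From HB Require Import structures.
From mathcomp Require Import all_boot all_order all_algebra all_field.
From mathcomp Require Import ring zify.
Set Implicit Arguments. Unset Strict Implicit. Unset Printing Implicit Defensive.
Import GRing.Theory.
Local Open Scope ring_scope.
Fixpoint wprod (F : fieldType) (C V : eqType) (h : C -> V -> F) (a : V) (s : seq (C * V)) : F :=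
  if s is (c, v) :: s' then h c v / h c a * wprod h v s' else 1.
Fixpoint wvalid (F : fieldType) (C V : eqType) (h : C -> V -> F) (a : V) (s : seq (C * V)) : bool :=
  if s is (c, v) :: s' then [&& h c a != 0, h c v != 0 & wvalid h v s'] else true.
Definition wend (C V : eqType) (a : V) (s : seq (C * V)) := last a (map snd s).

Lemma wprod_cat (F : fieldType) (C V : eqType) (h : C -> V -> F) a s1 s2 :
  wprod h a (s1 ++ s2) = wprod h a s1 * wprod h (wend a s1) s2.
Proof.
elim: s1 a => [|[c v] s1 IH] a /=; first by rewrite mul1r.
by rewrite IH mulrA.
Qed.

Lemma wvalid_cat (F : fieldType) (C V : eqType) (h : C -> V -> F) a s1 s2 :
  wvalid h a (s1 ++ s2) = wvalid h a s1 && wvalid h (wend a s1) s2.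
Proof.
elim: s1 a => [|[c v] s1 IH] a //=.
by rewrite IH !andbA.
Qed.

Lemma wend_cat (C V : eqType) (a : V) (s1 s2 : seq (C * V)) :
  wend a (s1 ++ s2) = wend (wend a s1) s2.
Proof. by rewrite /wend map_cat last_cat. Qed.

Lemma wend_cons (C V : eqType) (a : V) c v (s : seq (C * V)) :
  wend a ((c, v) :: s) = wend v s.
Proof. by []. Qed.

Lemma notuniq_split (T : eqType) (U : eqType) (f : T -> U) (l : seq T) :
  ~~ uniq (map f l) -> exists l1 x l2 y l3, l = l1 ++ x :: l2 ++ y :: l3 /\ f x = f y.
Proof.
elim: l => [|x l IH] //=; rewrite negb_and negbK; case/orP.
  case/mapP=> y yl fxy; case/splitPr: yl => l2 l3.
  by exists [::], x, l2, y, l3.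
case/IH=> l1 [x' [l2 [y [l3 [-> e]]]]].
by exists (x :: l1), x', l2, y, l3.
Qed.

Lemma nthBelast (T : eqType) (l : seq T) d a i : (i < size l)%N ->
  nth d (belast a l) i = nth d (a :: l) i.
Proof.
elim: l a i => [|x l IH] a [|i] //= H.
by rewrite IH.
Qed.

Lemma wprodE (F : fieldType) (C V : eqType) (h : C -> V -> F) c0 d a s :
  wprod h a s = \prod_(t < size s)
     (h (nth c0 (map fst s) t) (nth d (map snd s) t) /
      h (nth c0 (map fst s) t) (nth d (a :: map snd s) t)).
Proof.
elim: s a => [|[c v] s IH] a /=; first by rewrite big_ord0.
by rewrite big_ord_recl /= IH.
Qed.

Lemma wvalidE (F : fieldType) (C V : eqType) (h : C -> V -> F) c0 d a s :
  wvalid h a s -> forall t, (t < size s)%N ->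
   (h (nth c0 (map fst s) t) (nth d (a :: map snd s) t) != 0) &&
   (h (nth c0 (map fst s) t) (nth d (map snd s) t) != 0).
Proof.
elim: s a => [|[c v] s IH] a //= /and3P[h1 h2 h3] [|t] //=.
  by rewrite h1 h2.
by rewrite ltnS; apply: IH.
Qed.


Lemma uniq_belast (T : eqType) (a : T) l : last a l = a -> uniq l -> uniq (belast a l).
Proof.
case: l => [|x l] // he.
have he' : last x l = a := he.
by rewrite {1}(lastI x l) he' rcons_uniq.
Qed.

Lemma closed_walk (F : fieldType) (C V : eqType) (h : C -> V -> F)
  (Hcyc : forall k (vs : 'I_k -> V) (cs : 'I_k -> C), (2 <= k)%N -> injective vs -> injective cs ->
     (forall t, (h (cs t) (vs t) != 0) && (h (cs t) (vs (ordS t)) != 0)) ->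
     \prod_(t < k) (h (cs t) (vs (ordS t)) / h (cs t) (vs t)) = 1) :
  forall k a s, size s = k -> wvalid h a s -> wend a s = a -> wprod h a s = 1.
Proof.
elim/ltn_ind => k IH a s hs hv he.
case: (boolP (uniq (map snd s))) => [us|/notuniq_split [l1 [x [l2 [y [l3 [es exy]]]]]]]; last first.
  subst s.
  have E : l1 ++ x :: l2 ++ y :: l3 = (l1 ++ [:: x]) ++ (l2 ++ [:: y]) ++ l3 by rewrite -!catA.
  have e1 : wend a (l1 ++ [:: x]) = x.2 by rewrite wend_cat.
  have e2 : wend x.2 (l2 ++ [:: y]) = x.2 by rewrite wend_cat exy.
  have hs1 : (0 < size (l1 ++ [:: x]))%N by rewrite size_cat addn1.
  have hs2 : (0 < size (l2 ++ [:: y]))%N by rewrite size_cat addn1.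
  rewrite E in hs hv he *.
  move: (l1 ++ [:: x]) (l2 ++ [:: y]) e1 e2 hs1 hs2 hs hv he => s1 s2 e1 e2 hs1 hs2.
  have {}hs1 : (0 < @size (C * V)%type s1)%N := hs1. have {}hs2 : (0 < @size (C * V)%type s2)%N := hs2.
  rewrite !wvalid_cat !wend_cat e1 e2 !size_cat => hs /and3P[v1 v2 v3] he.
  rewrite !wprod_cat e1 e2.
  rewrite (IH (@size (C * V)%type s2) _ x.2 s2) //; last by lia.
  rewrite mul1r -e1 -wprod_cat.
  apply: (IH (size (s1 ++ l3))); first by rewrite !size_cat /=; lia.
    by [].
    by rewrite wvalid_cat v1 e1.
  by rewrite wend_cat e1.
case: (boolP (uniq (map fst s))) => [uc|/notuniq_split [l1 [[c v1] [l2 [[c' v2] [l3 [es /= ecc]]]]]]]; last first.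
  subst s c'.
  set u0 := wend a l1.
  set u1 := wend v1 l2.
  move: hs hv he; rewrite !wvalid_cat !wend_cat /= -/u0 !wvalid_cat -/u1 /= !size_cat /=.
  rewrite size_cat /= wend_cons wend_cat wend_cons.
  move=> hs /andP[va /andP[h0 /andP[h1 /andP[vb /andP[h2 /andP[h3 vc]]]]]] he.
  have eA : wprod h v1 (l2 ++ [:: (c, v1)]) = 1.
    apply: (IH (size (l2 ++ [:: (c, v1)]))); first by rewrite size_cat /=; lia.
      by [].
      by rewrite wvalid_cat vb /= -/u1 h2 h1.
    by rewrite wend_cat.
  have eB : wprod h a (l1 ++ (c, v2) :: l3) = 1.
    apply: (IH (size (l1 ++ (c, v2) :: l3))); first by rewrite size_cat /=; lia.
      by [].
      by rewrite wvalid_cat va /= -/u0 h0 h3 vc.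
    by rewrite wend_cat.
  rewrite -[RHS](mulr1 1) -[X in _ = X * _]eA -[X in _ = _ * X]eB.
  rewrite !wprod_cat /= -/u0 wprod_cat -/u1 /= mulr1.
  ring.
clear IH; subst k.
case: s hv he uc us => [|[c v] s'] //= hv he uc us.
case: s' hv he uc us => [|[c2 v2] s''] hv he uc us.
  move: he; rewrite /wend /= => he; subst v.
  by move: hv => /= /and3P[h0 _ _]; rewrite mulr1 mulfV.
set s := (c, v) :: (c2, v2) :: s''.
pose vs := fun t : 'I_(size s) => nth a (belast a (map snd s)) t.
pose cs := fun t : 'I_(size s) => nth c (map fst s) t.
have ub : uniq (belast a (map snd s)).
  exact: uniq_belast.
have Evs : forall t : 'I_(size s), vs t = nth a (a :: map snd s) t.
  by move=> t; rewrite /vs nthBelast // size_map.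
have Evs2 : forall t : 'I_(size s), vs (ordS t) = nth a (map snd s) t.
  move=> t; rewrite /vs; have -> : (ordS t : nat) = (t.+1 %% size s)%N by [].
  have lt := ltn_ord t.
  case: (ltnP t.+1 (size s)) => ht.
    by rewrite modn_small // nthBelast ?size_map.
  have et : t.+1 = size s by lia.
  rewrite et modnn nthBelast ?size_map //=.
  have -> : (t : nat) = (size (map snd s)).-1 by rewrite size_map; lia.
  by rewrite nth_last; symmetry; exact: he.
change (wprod h a s = 1). have hv' : wvalid h a s := hv.
rewrite (wprodE h c a a).
rewrite -[RHS](Hcyc (size s) vs cs) //.
- by apply: eq_bigr => t _; rewrite Evs2 Evs.
- move=> t1 t2 /eqP; rewrite /vs nth_uniq ?size_belast ?size_map //.
  by move/eqP/val_inj.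
- move=> t1 t2 /eqP; rewrite /cs nth_uniq ?size_map //.
  by move/eqP/val_inj.
- move=> t; rewrite Evs Evs2 /cs.
  exact: (wvalidE c a hv' (ltn_ord t)).
Qed.
Lemma odd_succ_mod (N x : nat) : ~~ odd N -> (x < N)%N -> odd ((x + 1) %% N) = ~~ odd x.
Proof.
move=> hN hx; case: (ltnP (x + 1) N) => h.
  by rewrite modn_small // addn1 /=.
have e : (x + 1 = N)%N by lia.
rewrite e modnn /=.
by move: hN; rewrite -e addn1 /= negbK => ->.
Qed.

Lemma nbr_sym n (a b : 'I_(n.*2)) : nbr a b = nbr b a.
Proof. by rewrite /nbr orbC. Qed.

Lemma nbr_irr n (a : 'I_(n.*2)) : (0 < n)%N -> ~~ nbr a a.
Proof.
move=> hn; rewrite /nbr orbb; apply/eqP => e.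
have lt := ltn_ord a.
move: e; case: (ltnP (a + 1) n.*2) => h.
  rewrite modn_small //; lia.
have -> : (a + 1 = n.*2)%N by lia.
rewrite modnn; lia.
Qed.

Lemma nbr_odd n (a b : 'I_(n.*2)) : nbr a b -> odd b = ~~ odd a.
Proof.
have hN : ~~ odd n.*2 by rewrite odd_double.
case/orP => /eqP <-.
  by rewrite odd_succ_mod.
by rewrite odd_succ_mod // negbK.
Qed.

Lemma diag n (hn : (0 < n)%N) (cz : CZnode n) (v w : Vnode n) :
  (val cz).2 = (val v).2 -> nbr (val cz).1 (val v).1 ->
  (val cz).1 = (val w).1 -> nbr (val cz).2 (val w).2 ->
  exists cx : CXnode n, [/\ adj (val cx) (val v), adj (val cx) (val w) &
     forall u : Vnode n, adj (val cx) (val u) -> adj (val cz) (val u) -> u = v \/ u = w].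
Proof.
case: cz => [[c1 c2] hc]; case: v => [[v1 v2] hv]; case: w => [[w1 w2] hw] /= e2 n1 e1 n2.
subst v2 w1.
have hx : isCX (v1, w2).
  move: hc; rewrite /isCX /isCZ /= => /andP[o1 o2].
  by rewrite (nbr_odd n1) (nbr_odd n2) o1 o2.
exists (exist _ (v1, w2) hx); split.
- by apply/orP; right; rewrite /= eqxx nbr_sym.
- by apply/orP; left; rewrite /= eqxx nbr_sym.
case=> [[u1 u2] hu]; rewrite /adj /= => h1 h2.
case/orP: h2 => /andP[/eqP e nb]; case/orP: h1 => /andP[/eqP e' nb']; subst.
- by move: n2; rewrite (negbTE (nbr_irr _ hn)).
- by left; apply: val_inj.
- by right; apply: val_inj.
- by move: n1; rewrite (negbTE (nbr_irr _ hn)).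
Qed.

Lemma lab0 (F : fieldType) n (C : finType) (cval : C -> node n) (H : C -> Vnode n -> F) :
  labeling cval H -> forall c v, ~~ adj (cval c) (val v) -> H c v = 0.
Proof. by move=> hl c v; rewrite -hl negbK => /eqP. Qed.

Lemma char2_eq (F : fieldType) (a b : F) : (2%:R : F) = 0 -> a + b = 0 -> a = b.
Proof.
move=> h2 hab.
have hb : b + b = 0 by rewrite -mulr2n -mulr_natr h2 mulr0.
by rewrite -[LHS]addr0 -hb addrA hab add0r.
Qed.

Lemma step n (hn : (0 < n)%N) (F : fieldType) (HX : CXnode n -> Vnode n -> F)
  (HZ : CZnode n -> Vnode n -> F)
  (hHX : labeling (fun c : CXnode n => val c) HX)
  (hHZ : labeling (fun c : CZnode n => val c) HZ)
  (orth : forall cz cx, \sum_u HX cx u * HZ cz u = 0) (h2 : (2%:R : F) = 0)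
  (cz : CZnode n) (v w : Vnode n) :
  (val cz).2 = (val v).2 -> nbr (val cz).1 (val v).1 ->
  (val cz).1 = (val w).1 -> nbr (val cz).2 (val w).2 ->
  exists cx, [/\ HX cx v != 0, HX cx w != 0 & HX cx v * HZ cz v = HX cx w * HZ cz w].
Proof.
move=> e2 n1 e1 n2.
have [cx [a1 a2 uq]] := diag hn e2 n1 e1 n2.
exists cx; rewrite !hHX a1 a2; split => //.
have vw : v != w.
  apply/eqP => evw; move: n2; rewrite -evw -e2.
  by rewrite (negbTE (nbr_irr _ hn)).
have := orth cz cx.
rewrite (bigD1 v) //= (bigD1 w) /=; last by rewrite eq_sym.
rewrite big1 ?addr0; first exact: char2_eq.
move=> u /andP[uw uv].
case: (boolP (adj (val cx) (val u))) => hx; last by rewrite (lab0 hHX hx) mul0r.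
case: (boolP (adj (val cz) (val u))) => hz; last by rewrite (lab0 hHZ hz) mulr0.
by case: (uq u hx hz) => e; subst; rewrite eqxx in uv uw.
Qed.

Definition XPath (F : fieldType) n (HX : CXnode n -> Vnode n -> F) (v w : Vnode n) (r : F) :=
  exists p : seq (CXnode n * Vnode n), [&& wvalid HX v p, wend v p == w & wprod HX v p == r].

Lemma xpath_cat (F : fieldType) n (HX : CXnode n -> Vnode n -> F) v y w r1 r2 :
  XPath HX v y r1 -> XPath HX y w r2 -> XPath HX v w (r1 * r2).
Proof.
case=> p1 /and3P[h1 /eqP e1 /eqP f1]; case=> p2 /and3P[h2 /eqP e2 /eqP f2].
exists (p1 ++ p2); rewrite wvalid_cat wend_cat wprod_cat e1 h1 h2 e2 f1 f2.
by rewrite !eqxx.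
Qed.

Lemma xpath1 (F : fieldType) n (HX : CXnode n -> Vnode n -> F) (HZ : CZnode n -> Vnode n -> F)
  cz cx v w : HX cx v != 0 -> HX cx w != 0 -> HZ cz v != 0 -> HZ cz w != 0 ->
  HX cx v * HZ cz v = HX cx w * HZ cz w -> XPath HX v w (HZ cz v / HZ cz w).
Proof.
move=> a1 a2 b1 b2 e; exists [:: (cx, w)].
rewrite /= a1 a2 eqxx mulr1 /= eqr_div //.
by rewrite -e mulrC.
Qed.

Lemma xpath_mid (F : fieldType) n (HX : CXnode n -> Vnode n -> F) (HZ : CZnode n -> Vnode n -> F)
  cz v y w : HZ cz y != 0 ->
  XPath HX v y (HZ cz v / HZ cz y) -> XPath HX y w (HZ cz y / HZ cz w) ->
  XPath HX v w (HZ cz v / HZ cz w).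
Proof.
move=> hy p1 p2; have := xpath_cat p1 p2.
by rewrite mulrA divfK.
Qed.

Lemma zpath n (hn : (0 < n)%N) (F : fieldType) (HX : CXnode n -> Vnode n -> F)
  (HZ : CZnode n -> Vnode n -> F)
  (hHX : labeling (fun c : CXnode n => val c) HX)
  (hHZ : labeling (fun c : CZnode n => val c) HZ)
  (orth : forall cz cx, \sum_u HX cx u * HZ cz u = 0) (h2 : (2%:R : F) = 0)
  (cz : CZnode n) (v w : Vnode n) :
  adj (val cz) (val v) -> adj (val cz) (val w) -> XPath HX v w (HZ cz v / HZ cz w).
Proof.
have hv : forall p q, (val cz).2 = (val p).2 -> nbr (val cz).1 (val p).1 ->
    (val cz).1 = (val q).1 -> nbr (val cz).2 (val q).2 ->
    [/\ XPath HX p q (HZ cz p / HZ cz q), XPath HX q p (HZ cz q / HZ cz p),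
        HZ cz p != 0 & HZ cz q != 0].
  move=> p q a b c d; have [cx [x1 x2 e]] := step hn hHX hHZ orth h2 a b c d.
  have zp : HZ cz p != 0 by rewrite hHZ /adj a eqxx b.
  have zq : HZ cz q != 0 by rewrite hHZ /adj c eqxx d orbT.
  split => //; [exact: xpath1 x1 x2 zp zq e | exact: xpath1 x2 x1 zq zp (esym e)].
have hN : (0 < n.*2)%N by rewrite double_gt0.
have hcz := valP cz; move: hcz; rewrite /isCZ => /andP[o1 o2].
pose bV : 'I_(n.*2) := Ordinal (ltn_pmod ((val cz).2 + 1) hN).
have nbV : nbr (val cz).2 bV by rewrite /nbr eqxx.
have iV : isV ((val cz).1, bV).
  by rewrite /isV /= oddD (nbr_odd nbV) (negbTE o1) o2.
pose yV : Vnode n := exist _ ((val cz).1, bV) iV.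
pose aH : 'I_(n.*2) := Ordinal (ltn_pmod ((val cz).1 + 1) hN).
have naH : nbr (val cz).1 aH by rewrite /nbr eqxx.
have iH : isV (aH, (val cz).2).
  by rewrite /isV /= oddD (nbr_odd naH) (negbTE o1) o2.
pose yH : Vnode n := exist _ (aH, (val cz).2) iH.
case/orP => /andP[/eqP ev nv]; case/orP => /andP[/eqP ew nw].
- have [h1 _ _ zy] := hv v yV ev nv erefl nbV.
  have [_ h2' _ _] := hv w yV ew nw erefl nbV.
  exact: xpath_mid zy h1 h2'.
- by case: (hv v w ev nv ew nw).
- by case: (hv w v ew nw ev nv).
- have [_ h1 zy _] := hv yH v erefl naH ev nv.
  have [h2' _ _ _] := hv yH w erefl naH ew nw.
  exact: xpath_mid zy h1 h2'.
Qed.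

Unset Implicit Arguments.
Theorem lemma3 (n m : nat) (F : finFieldType) (hn : (2 <= n)%N)
  (hq : #|F| = (2 ^ m)%N)
  (HX : CXnode n -> Vnode n -> F) (HZ : CZnode n -> Vnode n -> F)
  (hHX : labeling (fun c : CXnode n => val c) HX)
  (hHZ : labeling (fun c : CZnode n => val c) HZ) :
  all_cycles_one (fun c : CXnode n => val c) HX ->
  perp_sub (code HZ) (code HX) ->
  all_cycles_one (fun c : CZnode n => val c) HZ.
Proof.
move=> hX hperp k vs cs [hk injv injc hadj].
have hn' : (0 < n)%N by lia.
have orth : forall cz cx, \sum_u HX cx u * HZ cz u = 0.
  by move=> cz cx; apply: (hperp (HZ cz)) => u hu; exact: hu cz.
have h2 : (2%:R : F) = 0.
  by apply: pcharf0; apply: (card_finPcharP hq).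
have Hcyc : forall k (vs : 'I_k -> Vnode n) (cs : 'I_k -> CXnode n), (2 <= k)%N ->
     injective vs -> injective cs ->
     (forall t, (HX (cs t) (vs t) != 0) && (HX (cs t) (vs (ordS t)) != 0)) ->
     \prod_(t < k) (HX (cs t) (vs (ordS t)) / HX (cs t) (vs t)) = 1.
  move=> k1 vs1 cs1 hk1 i1 i2 hh; apply: (hX k1 vs1 cs1); split => // t.
  by rewrite -!hHX.
have cw := closed_walk Hcyc.
case: k vs cs hk injv injc hadj => [|k'] // vs cs hk injv injc hadj.
pose R := fun t : 'I_k'.+1 => HZ (cs t) (vs t) / HZ (cs t) (vs (ordS t)).
have i0 : inord 0 = ord0 :> 'I_k'.+1 by apply: val_inj; rewrite /= inordK.
have claim : forall r, (r <= k'.+1)%N ->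
    XPath HX (vs ord0) (vs (inord (r %% k'.+1))) (\prod_(0 <= t < r) R (inord t)).
  elim=> [|r IH] hr.
    by exists [::]; rewrite big_geq // mod0n i0 /= !eqxx.
  have hr' : (r < k'.+1)%N by [].
  have := IH (ltnW hr); rewrite modn_small // => P1.
  have /andP[a1 a2] := hadj (inord r).
  have P2 := zpath hn' hHX hHZ orth h2 a1 a2.
  have e : ordS (inord r : 'I_k'.+1) = inord (r.+1 %% k'.+1).
    apply: val_inj; rewrite /= !inordK //; last by rewrite ltn_pmod.
  rewrite big_nat_recr //= /R e; rewrite e in P2.
  exact: xpath_cat P1 P2.
have [p /and3P[pv /eqP pe /eqP pp]] := claim k'.+1 (leqnn _).
rewrite modnn i0 in pe.
have := cw _ _ p erefl pv pe; rewrite pp => hP.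
rewrite /cycle_product.
have -> : \prod_(t < k'.+1) (HZ (cs t) (vs (ordS t)) / HZ (cs t) (vs t))
    = (\prod_(t < k'.+1) R t)^-1.
  by rewrite -prodfV; apply: eq_bigr => t _; rewrite invf_div.
have -> : \prod_(t < k'.+1) R t = \prod_(0 <= t < k'.+1) R (inord t).
  by rewrite big_mkord; apply: eq_bigr => t _; rewrite inord_val.
by rewrite hP invr1.
Qed.
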